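(* Let $\mathrm{PARITY}:\{0,1\}^n\rightarrow\{0,1\}$, $\mathrm{PARITY}(x)=\bigoplus_i x_i$. Then $UC(\mathrm{PARITY})=WUC(\mathrm{PARITY})=n$ and $UQ(\mathrm{PARITY})=WUQ(\mathrm{PARITY})=\lceil n/2\rceil$.
   Context: Query model: a classical randomized query algorithm adaptively queries input bits $x_i$ (each query costs one) and outputs a bit; a quantum query algorithm alternates input-independent unitaries with the oracle $O_x:|i,b,z\rangle\mapsto|i,b\oplus x_i,z\rangle$ and measures an output bit. $UQ(f)$ (resp. $UC(f)$) is the minimum number of queries of a quantum (resp. classical randomized) algorithm that on every input outputs $f(x)$ with probability strictly greater than $1/2$. For an algorithm whose minimum over inputs of the success probability is $p>1/2$, its bias is $\beta=p-1/2$ and its weakly unbounded cost is (number of queries) $+\log(1/(2\beta))$; $WUQ(f)$ (resp. $WUC(f)$) is the minimum weakly unbounded cost over quantum (resp. classical randomized) algorithms. $\log$ is base 2. *)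

(* Defs.v *)
From HB Require Import structures.
From mathcomp Require Import all_boot all_order all_algebra.
From mathcomp Require Import reals exp.
From mathcomp Require Import complex.
From Stdlib Require List.

Set Implicit Arguments.
Unset Strict Implicit.
Unset Printing Implicit Defensive.

Import Order.TTheory GRing.Theory Num.Theory.
Local Open Scope ring_scope.

Definition input (n : nat) := {ffun 'I_n -> bool}.

Definition parity (n : nat) (x : input n) : bool :=
  \big[addb/false]_(i < n) x i.

Definition log2 {R : realType} (y : R) : R := ln y / ln 2.

Inductive dtree (n : nat) : Type :=
| DLeaf of bool
| DQuery of 'I_n & dtree n & dtree n.

Fixpoint dt_eval (n : nat) (t : dtree n) (x : input n) : bool :=
  match t with
  | DLeaf b => b
  | DQuery i t0 t1 => if x i then dt_eval t1 x else dt_eval t0 x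
  end.

Fixpoint dt_depth (n : nat) (t : dtree n) : nat :=
  match t with
  | DLeaf _ => 0
  | DQuery _ t0 t1 => (maxn (dt_depth t0) (dt_depth t1)).+1
  end.

(** A randomized algorithm making (at most) [ra_T] queries: a finite
    probability distribution over deterministic decision trees, each making
    at most [ra_T] queries. *)
Record rand_alg (R : realType) (n : nat) := RandAlg {
  ra_T : nat;
  ra_dist : seq (R * dtree n)
}.

Definition rand_alg_valid (R : realType) (n : nat) (A : rand_alg R n) : Prop :=
  [/\ forall p, List.In p (ra_dist A) -> 0 <= p.1,
      \sum_(p <- ra_dist A) p.1 = 1
    & forall p, List.In p (ra_dist A) -> (dt_depth p.2 <= ra_T A)%N].

Definition ra_prob (R : realType) (n : nat) (A : rand_alg R n)
    (x : input n) (b : bool) : R :=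
  \sum_(p <- ra_dist A) p.1 * (dt_eval p.2 x == b)%:R.

Definition ra_minsucc (R : realType) (n : nat) (A : rand_alg R n)
    (f : input n -> bool) : R :=
  \big[Num.min/1]_(x : input n) ra_prob A x (f x).

Definition ra_bias (R : realType) n (A : rand_alg R n) f : R :=
  ra_minsucc A f - 1 / 2.

Definition ra_wucost (R : realType) n (A : rand_alg R n) f : R :=
  (ra_T A)%:R + log2 (1 / (2 * ra_bias A f)).

(** Basis states |i, b, z> with query register i : 'I_n, answer bit b and
    workspace z : 'I_m.+1 (workspace of arbitrary finite dimension m+1). *)
Definition qbasis (n m : nat) := ('I_n * bool * 'I_m.+1)%type.

Definition qvec (R : realType) n m := qbasis n m -> R[i].
Definition qop (R : realType) n m := qbasis n m -> qbasis n m -> R[i].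

Definition qapply (R : realType) n m (U : qop R n m) (v : qvec R n m)
  : qvec R n m := fun s => \sum_(t : qbasis n m) U s t * v t.

Definition unitary (R : realType) n m (U : qop R n m) : Prop :=
  (forall s t, \sum_(k : qbasis n m) U s k * (U t k)^* = (s == t)%:R) /\
  (forall s t, \sum_(k : qbasis n m) (U k s)^* * U k t = (s == t)%:R).

Definition oracle (R : realType) n m (x : input n) (v : qvec R n m)
  : qvec R n m := fun s => v (s.1.1, s.1.2 (+) x s.1.1, s.2).

Definition ket (R : realType) n m (s0 : qbasis n m) : qvec R n m :=
  fun s => (s == s0)%:R.

(** A quantum algorithm with [size qa_Us] queries: starting in the basis
    state [qa_init], apply [qa_U0], then alternately O_x and the next
    unitary of [qa_Us]; finally measure in the computational basis and
    output [qa_out] of the outcome. *)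
Record qalg (R : realType) (n m : nat) := QAlg {
  qa_init : qbasis n m;
  qa_U0 : qop R n m;
  qa_Us : seq (qop R n m);
  qa_out : qbasis n m -> bool
}.

Definition qa_T (R : realType) n m (A : qalg R n m) : nat := size (qa_Us A).

Definition qalg_valid (R : realType) n m (A : qalg R n m) : Prop :=
  unitary (qa_U0 A) /\ (forall U, List.In U (qa_Us A) -> unitary U).

Definition qa_final (R : realType) n m (A : qalg R n m) (x : input n)
  : qvec R n m :=
  foldl (fun v U => qapply U (oracle x v)) (qapply (qa_U0 A) (ket R (qa_init A)))
        (qa_Us A).

Definition normsq (R : realType) (z : R[i]) : R :=
  complex.Re z ^+ 2 + complex.Im z ^+ 2.

Definition qa_prob (R : realType) n m (A : qalg R n m) (x : input n)
    (b : bool) : R :=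
  \sum_(s : qbasis n m | qa_out A s == b) normsq (qa_final A x s).

Definition qa_minsucc (R : realType) n m (A : qalg R n m)
    (f : input n -> bool) : R :=
  \big[Num.min/1]_(x : input n) qa_prob A x (f x).

Definition qa_bias (R : realType) n m (A : qalg R n m) f : R :=
  qa_minsucc A f - 1 / 2.

Definition qa_wucost (R : realType) n m (A : qalg R n m) f : R :=
  (qa_T A)%:R + log2 (1 / (2 * qa_bias A f)).

Definition UC_is (R : realType) (n : nat) (f : input n -> bool) (k : nat) :=
  (exists A : rand_alg R n, [/\ rand_alg_valid A,
      forall x, ra_prob A x (f x) > 1 / 2 & ra_T A = k]) /\
  (forall A : rand_alg R n, rand_alg_valid A ->
      (forall x, ra_prob A x (f x) > 1 / 2) -> (k <= ra_T A)%N).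

Definition WUC_is (R : realType) (n : nat) (f : input n -> bool) (c : R) :=
  (exists A : rand_alg R n, [/\ rand_alg_valid A,
      ra_minsucc A f > 1 / 2 & ra_wucost A f = c]) /\
  (forall A : rand_alg R n, rand_alg_valid A ->
      ra_minsucc A f > 1 / 2 -> c <= ra_wucost A f).

Definition UQ_is (R : realType) (n : nat) (f : input n -> bool) (k : nat) :=
  (exists m (A : qalg R n m), [/\ qalg_valid A,
      forall x, qa_prob A x (f x) > 1 / 2 & qa_T A = k]) /\
  (forall m (A : qalg R n m), qalg_valid A ->
      (forall x, qa_prob A x (f x) > 1 / 2) -> (k <= qa_T A)%N).

Definition WUQ_is (R : realType) (n : nat) (f : input n -> bool) (c : R) :=
  (exists m (A : qalg R n m), [/\ qalg_valid A,
      qa_minsucc A f > 1 / 2 & qa_wucost A f = c]) /\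
  (forall m (A : qalg R n m), qalg_valid A ->
      qa_minsucc A f > 1 / 2 -> c <= qa_wucost A f).

(* Main.v *)
Require Import Defs.
From HB Require Import structures.
From mathcomp Require Import all_boot all_order all_algebra.
From mathcomp Require Import reals exp complex.
From mathcomp Require Import ring lra zify.
From Stdlib Require Import FunctionalExtensionality.
Set Implicit Arguments.
Unset Strict Implicit.
Unset Printing Implicit Defensive.
Local Open Scope ring_scope.
Import GRing.Theory Num.Theory Order.TTheory.


Section Low.
Variable K : comNzRingType.
Variable n : nat.

Definition mono (S : {set 'I_n}) (x : input n) : K := (S \subset [set i | x i])%:R.

Definition low (d : nat) (g : input n -> K) :=
  exists s : seq (K * {set 'I_n}), (forall p, List.In p s -> #|p.2| <= d)%N /\
     forall x, g x = \sum_(p <- s) p.1 * mono p.2 x.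

Lemma low_ext d g h : (forall x, g x = h x) -> low d g -> low d h.
Proof. by move=> E [s [H1 H2]]; exists s; split=> // x; rewrite -E. Qed.

Lemma low_le d d' g : (d <= d')%N -> low d g -> low d' g.
Proof.
by move=> le [s [H1 H2]]; exists s; split=> // p /H1 H; apply: leq_trans le.
Qed.

Lemma low_const d c : low d (fun _ => c).
Proof.
exists [:: (c, set0)]; split; first by move=> p [<-|[]]; rewrite cards0.
by move=> x; rewrite big_cons big_nil addr0 /mono sub0set mulr1.
Qed.

Lemma low_add d g h : low d g -> low d h -> low d (fun x => g x + h x).
Proof.
move=> [s [H1 H2]] [t [H3 H4]]; exists (s ++ t); split.
  by move=> p Hp; case: (List.in_app_or _ _ _ Hp) => [/H1|/H3].
by move=> x; rewrite big_cat /= H2 H4.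
Qed.

Lemma low_scale d c g : low d g -> low d (fun x => c * g x).
Proof.
move=> [s [H1 H2]]; exists (map (fun p => (c * p.1, p.2)) s); split.
  by move=> p Hp; case: (proj1 (List.in_map_iff _ _ _) Hp) => q [<- /H1].
by move=> x; rewrite big_map H2 mulr_sumr; apply: eq_bigr => p _; rewrite mulrA.
Qed.

Lemma low_sum (T : Type) (r : seq T) (P : pred T) (F : T -> input n -> K) d :
  (forall t, List.In t r -> low d (F t)) ->
  low d (fun x => \sum_(t <- r | P t) F t x).
Proof.
elim: r => [|a r IH] H.
  by apply: (low_ext _ (low_const d 0)) => x; rewrite big_nil.
have Hr : low d (fun x => \sum_(t <- r | P t) F t x).
  by apply: IH => t Ht; apply: H; right.
case Pa: (P a).
  apply: (low_ext _ (low_add (H a (or_introl erefl)) Hr)) => x.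
  by rewrite big_cons Pa.
by apply: (low_ext _ Hr) => x; rewrite big_cons Pa.
Qed.

Lemma monoU (S T : {set 'I_n}) x : mono S x * mono T x = mono (S :|: T) x.
Proof. by rewrite /mono subUset; case: (S \subset _); case: (T \subset _); rewrite ?mulr1 ?mulr0. Qed.

Lemma low_monomul (S : {set 'I_n}) d g : low d g -> low (#|S| + d) (fun x => mono S x * g x).
Proof.
move=> [s [H1 H2]]; exists (map (fun p => (p.1, S :|: p.2)) s); split.
  move=> p Hp; case: (proj1 (List.in_map_iff _ _ _) Hp) => q [<- /H1 Hq] /=.
  apply: leq_trans (leq_card_setU S q.2) _; rewrite leq_add2l //.
move=> x; rewrite big_map H2 mulr_sumr; apply: eq_bigr => p _.
by rewrite -monoU; ring.
Qed.

Lemma low_mul a b g h : low a g -> low b h -> low (a + b) (fun x => g x * h x).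
Proof.
move=> [s [H1 H2]] Hh.
apply: (low_ext (g := fun x => \sum_(p <- s) p.1 * (mono p.2 x * h x))).
  by move=> x; rewrite H2 mulr_suml; apply: eq_bigr => p _; rewrite mulrA.
apply: low_sum => p /H1 Hp; apply: low_scale.
by apply: low_le (low_monomul p.2 Hh); rewrite leq_add2r.
Qed.

Lemma low_var i : low 1 (fun x => (x i)%:R).
Proof.
exists [:: (1, [set i])]; split; first by move=> p [<-|[]]; rewrite cards1.
move=> x; rewrite big_cons big_nil addr0 mul1r /mono sub1set inE //.
Qed.

Lemma low_nvar i : low 1 (fun x => 1 - (x i)%:R).
Proof.
apply: (low_ext _ (low_add (low_const 1 1) (low_scale (-1) (low_var i)))).
by move=> x; ring.
Qed.

Lemma low_if i d g h : low d g -> low d h ->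
  low d.+1 (fun x => if x i then g x else h x).
Proof.
move=> Hg Hh.
apply: (low_ext _ (low_add (low_mul (low_var i) Hg) (low_mul (low_nvar i) Hh))).
by move=> x; case: (x i); rewrite /= ?subrr ?subr0; ring.
Qed.

End Low.

Lemma big_In0 (V : zmodType) (T : Type) (r : seq T) (F : T -> V) :
  (forall t, List.In t r -> F t = 0) -> \sum_(t <- r) F t = 0.
Proof.
elim: r => [|a r IH] H; first by rewrite big_nil.
by rewrite big_cons H ?IH ?add0r //; [move=> t Ht; apply: H; right | left].
Qed.

Section Fourier.
Variable R : realType.
Variable n : nat.

Definition sgnp (x : input n) : R := if parity x then -1 else 1.

Definition flip (j : 'I_n) (x : input n) : input n :=
  [ffun i => if i == j then ~~ x i else x i].

Lemma flipK j : involutive (flip j).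
Proof. by move=> x; apply/ffunP => i; rewrite !ffunE; case: eqP => // _; rewrite negbK. Qed.

Lemma parity_flip j x : parity (flip j x) = ~~ parity x.
Proof.
rewrite /parity (bigD1 j) //= [in RHS](bigD1 j) //= ffunE eqxx.
rewrite (eq_bigr (fun i => x i)); last by move=> i /negbTE Hi; rewrite ffunE Hi.
by rewrite addNb.
Qed.

Lemma mono_flip j (S : {set 'I_n}) x : j \notin S -> mono R S (flip j x) = mono R S x.
Proof.
move=> hj; rewrite /mono.
suff -> : (S \subset [set i | flip j x i]) = (S \subset [set i | x i]) by [].
apply/idP/idP => /subsetP H; apply/subsetP => i iS; have := H i iS;
  rewrite !inE ffunE; case: eqP => // E; by move: hj; rewrite -E iS.
Qed.

Lemma sum_sgn_mono (S : {set 'I_n}) : (#|S| < n)%N -> \sum_(x : input n) sgnp x * mono R S x = 0.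
Proof.
move=> hS.
have [j hj] : exists j, j \notin S.
  case: (boolP [exists j, j \notin S]) => [/existsP //|].
  rewrite negb_exists => /forallP H.
  have ST : S = setT by apply/setP => i; rewrite inE; move: (H i); rewrite negbK.
  by move: hS; rewrite ST cardsT card_ord ltnn.
pose F := fun x => sgnp x * mono R S x.
change (\sum_x F x = 0).
have E : \sum_x F x = \sum_x F (flip j x) by apply: reindex_inj; apply: can_inj (flipK j).
have E2 : \sum_x F (flip j x) = - \sum_x F x.
  rewrite -sumrN; apply: eq_bigr => x _; rewrite /F /sgnp parity_flip mono_flip //.
  by case: (parity x); rewrite /=; ring.
lra.
Qed.

Lemma sum_sgn_low d g : (d < n)%N -> low d g -> \sum_(x : input n) sgnp x * g x = 0.
Proof.
move=> hd [s [H1 H2]].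
rewrite (eq_bigr (fun x => \sum_(p <- s) p.1 * (sgnp x * mono R p.2 x))); last first.
  by move=> x _; rewrite H2 mulr_sumr; apply: eq_bigr => p _; ring.
rewrite exchange_big /=; apply: big_In0 => p /H1 Hp.
by rewrite -mulr_sumr sum_sgn_mono ?mulr0 //; apply: leq_ltn_trans hd.
Qed.

Lemma avg_lemma d (g1 g0 : input n -> R) : (d < n)%N -> low d g1 ->
  (forall x, g1 x + g0 x = 1) ->
  exists x, (if parity x then g1 x else g0 x) <= 1/2.
Proof.
move=> hd hg Hs.
case: (boolP [exists x, (if parity x then g1 x else g0 x) <= 1/2]) => [/existsP //|].
rewrite negb_exists => /forallP H; exfalso.
pose f := fun x => (if parity x then g1 x else g0 x) - 1/2.
have Hf : forall x, 0 < f x by move=> x; move: (H x); rewrite -ltNge /f; lra.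
have E : \sum_x f x = - (\sum_x sgnp x * g1 x) + 1/2 * \sum_x sgnp x * 1.
  rewrite mulr_sumr -sumrN -big_split /=; apply: eq_bigr => x _.
  rewrite /f /sgnp; have := Hs x; case: (parity x) => /= ?; lra.
have Z1 := sum_sgn_low hd hg.
have Z0 : \sum_x sgnp x * (1:R) = 0.
  by apply: (sum_sgn_low (d := 0) (g := fun _ => 1)) (low_const _ 0 1); apply: leq_ltn_trans hd.
rewrite Z1 Z0 in E.
pose x0 : input n := [ffun _ => false].
have : 0 < \sum_x f x.
  rewrite (bigD1 x0) //=; have := Hf x0.
  have : 0 <= \sum_(x | x != x0) f x by apply: sumr_ge0 => x _; apply: ltW.
  lra.
lra.
Qed.

End Fourier.

Lemma mbigmin_le (R : realType) (T : finType) (F : T -> R) (x : T) :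
  \big[Num.min/1]_(y : T) F y <= F x.
Proof.
rewrite unlock /reducebig; have : x \in index_enum T by rewrite mem_index_enum.
elim: (index_enum T) => [//|a r IH]; rewrite inE /= => /orP [/eqP <-|/IH H].
  by rewrite ge_min lexx.
by rewrite ge_min H orbT.
Qed.

Lemma mbigmin_le1 (R : realType) (T : finType) (F : T -> R) :
  \big[Num.min/1]_(y : T) F y <= 1.
Proof.
rewrite unlock /reducebig; elim: (index_enum T) => [//|a r IH] /=.
by rewrite ge_min IH orbT.
Qed.

Lemma mbigmin_gt (R : realType) (T : finType) (F : T -> R) c :
  c < 1 -> (forall x, c < F x) -> c < \big[Num.min/1]_(y : T) F y.
Proof.
move=> h1 H; rewrite unlock /reducebig; elim: (index_enum T) => [//|a r IH] /=.
by rewrite lt_min H IH.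
Qed.

Lemma log_cost_ge0 (R : realType) (p : R) : 1/2 < p -> p <= 1 ->
  0 <= log2 (1 / (2 * (p - 1/2))).
Proof.
move=> h1 h2; rewrite /log2; apply: divr_ge0; last by apply: ln_ge0; lra.
apply: ln_ge0; rewrite ler_pdivlMr; lra.
Qed.

Lemma log_cost_1 (R : realType) : log2 (1 / (2 * ((1:R) - 1/2))) = 0.
Proof.
have -> : 1 / (2 * ((1:R) - 1/2)) = 1 by field.
by rewrite /log2 ln1 mul0r.
Qed.


Section Classical.
Variable R : realType.
Variable n : nat.

Lemma dt_low (t : dtree n) b : low (dt_depth t) (fun x => (dt_eval t x == b)%:R : R).
Proof.
elim: t => [c|i t0 IH0 t1 IH1] /=; first exact: low_const.
apply: (low_ext _ (low_if i (low_le (leq_maxr (dt_depth t0) (dt_depth t1)) IH1)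
                             (low_le (leq_maxl (dt_depth t0) (dt_depth t1)) IH0))).
by move=> x; case: (x i).
Qed.

Lemma ra_low (A : rand_alg R n) b : rand_alg_valid A ->
  low (ra_T A) (fun x => ra_prob A x b).
Proof.
case=> H1 H2 H3; rewrite /ra_prob.
apply: (low_sum predT (F := fun p x => p.1 * (dt_eval p.2 x == b)%:R)).
move=> p Hp; apply: low_scale; apply: low_le (dt_low _ _); exact: H3.
Qed.

Lemma ra_sum (A : rand_alg R n) x : rand_alg_valid A ->
  ra_prob A x true + ra_prob A x false = 1.
Proof.
case=> H1 H2 H3; rewrite /ra_prob -big_split /= -[RHS]H2; apply: eq_bigr => p _.
by case: (dt_eval p.2 x); rewrite /=; ring.
Qed.

Lemma ra_lower (A : rand_alg R n) : rand_alg_valid A ->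
  (forall x, 1/2 < ra_prob A x (parity x)) -> (n <= ra_T A)%N.
Proof.
move=> hv H; rewrite leqNgt; apply/negP => hT.
have [x Hx] := avg_lemma hT (ra_low true hv) (fun x => ra_sum x hv).
by move: (H x); case: (parity x) in Hx *; lra.
Qed.

Fixpoint build (l : seq 'I_n) (acc : bool) : dtree n :=
  match l with
  | [::] => DLeaf n acc
  | i :: l' => DQuery i (build l' acc) (build l' (~~ acc))
  end.

Lemma build_eval l acc x : dt_eval (build l acc) x = acc (+) \big[addb/false]_(i <- l) x i.
Proof.
elim: l acc => [|i l IH] acc /=; first by rewrite big_nil addbF.
rewrite big_cons !IH; case: (x i) => /=; by case: acc; case: (\big[addb/false]_(j <- l) x j).
Qed.

Lemma build_depth l acc : dt_depth (build l acc) = size l.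
Proof. by elim: l acc => [|i l IH] acc //=; rewrite !IH maxnn. Qed.

Definition ptree := build (index_enum 'I_n) false.

Lemma ptree_eval x : dt_eval ptree x = parity x.
Proof. by rewrite /ptree build_eval. Qed.

Lemma ptree_depth : dt_depth ptree = n.
Proof. by rewrite /ptree build_depth -[index_enum _]filter_predT deprecated_filter_index_enum -cardE card_ord. Qed.

Definition palg : rand_alg R n := RandAlg n [:: (1, ptree)].

Lemma palg_valid : rand_alg_valid palg.
Proof.
split.
- by move=> p [<-|[]].
- by rewrite big_cons big_nil addr0.
- by move=> p [<-|[]]; rewrite /= ptree_depth.
Qed.

Lemma palg_prob x : ra_prob palg x (parity x) = 1.
Proof. by rewrite /ra_prob big_cons big_nil /= ptree_eval eqxx addr0 mulr1. Qed.

End Classical.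


Section QLower.
Variable R : realType.
Variables n m : nat.

Lemma oracle_low d (v : input n -> qvec R n m) :
  (forall s, low d (fun x => v x s)) ->
  forall s, low d.+1 (fun x => oracle x (v x) s).
Proof.
move=> H [[i b] z]; rewrite /oracle /=.
apply: (low_ext _ (low_if i (H (i, ~~ b, z)) (H (i, b, z)))).
by move=> x; case: (x i); rewrite ?addbT ?addbF.
Qed.

Lemma qapply_low d (U : qop R n m) (v : input n -> qvec R n m) :
  (forall s, low d (fun x => v x s)) ->
  forall s, low d (fun x => qapply U (v x) s).
Proof.
move=> H s; rewrite /qapply.
apply: (low_sum predT (F := fun t x => U s t * v x t)) => t _.
exact: low_scale.
Qed.

Lemma foldl_low (Us : seq (qop R n m)) d (v : input n -> qvec R n m) :
  (forall s, low d (fun x => v x s)) ->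
  forall s, low (d + size Us)
    (fun x => foldl (fun w U => qapply U (oracle x w)) (v x) Us s).
Proof.
elim: Us d v => [|U Us IH] d v H s /=; first by rewrite addn0.
rewrite addnS -addSn.
apply: (IH d.+1 (fun x => qapply U (oracle x (v x)))).
by apply: qapply_low; apply: oracle_low.
Qed.

Lemma qfinal_low (A : qalg R n m) s : low (qa_T A) (fun x => qa_final A x s).
Proof.
rewrite /qa_final /qa_T -[size _]add0n.
apply: (foldl_low _ (v := fun x => qapply (qa_U0 A) (ket R (qa_init A)))) => s'.
exact: low_const.
Qed.

Lemma low_map (f : R[i] -> R) d (g : input n -> R[i]) :
  f 0 = 0 -> {morph f : a b / a + b} ->
  (forall c (b : bool), f (c * b%:R) = f c * b%:R) ->
  low d g -> low d (fun x => f (g x)).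
Proof.
move=> f0 fD fM [s [H1 H2]]; exists (map (fun p => (f p.1, p.2)) s); split.
  by move=> p Hp; case: (proj1 (List.in_map_iff _ _ _) Hp) => q [<- /H1].
move=> x; rewrite H2 big_map (big_morph f fD f0); apply: eq_bigr => p _.
by rewrite /mono fM.
Qed.

Lemma normsq_low d (g : input n -> R[i]) : low d g -> low (d + d) (fun x => normsq (g x)).
Proof.
move=> hg.
have hr : low d (fun x => complex.Re (g x)).
  apply: low_map => //; first by move=> [a b] [c e].
  by move=> [a b] []; rewrite ?mulr1 ?mulr0.
have hi : low d (fun x => complex.Im (g x)).
  apply: low_map => //; first by move=> [a b] [c e].
  by move=> [a b] []; rewrite ?mulr1 ?mulr0.
apply: (low_ext _ (low_add (low_mul hr hr) (low_mul hi hi))).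
by move=> x; rewrite /normsq !expr2.
Qed.

Lemma qprob_low (A : qalg R n m) b : low ((qa_T A) + (qa_T A)) (fun x => qa_prob A x b).
Proof.
rewrite /qa_prob.
apply: (low_sum (fun s => qa_out A s == b) (F := fun s x => normsq (qa_final A x s))) => s _.
exact: normsq_low (qfinal_low A s).
Qed.

Definition Nv (v : qvec R n m) := \sum_s v s * (v s)^*.

Lemma normsq_C (z : R[i]) : ((normsq z)%:C = z * z^*)%C.
Proof.
case: z => a b; rewrite /normsq /=; simpc; rewrite -complexr0 !expr2.
by congr (Complex _ _); ring.
Qed.

Lemma sum_normsq (v : qvec R n m) : ((\sum_s normsq (v s))%:C)%C = Nv v.
Proof. by rewrite raddf_sum; apply: eq_bigr => s _; exact: normsq_C. Qed.

Lemma sum_delta (T : finType) (F : T -> R[i]) t0 :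
  \sum_t F t * (t == t0)%:R = F t0.
Proof.
rewrite (bigD1 t0) //= eqxx mulr1 big1 ?addr0 // => t /negbTE ->.
by rewrite mulr0.
Qed.

Lemma Nv_qapply (U : qop R n m) v : unitary U -> Nv (qapply U v) = Nv v.
Proof.
case=> _ HU; rewrite /Nv /qapply.
transitivity (\sum_s \sum_t \sum_t' (v t * (v t')^*) * ((U s t')^* * U s t)).
  apply: eq_bigr => s _; rewrite rmorph_sum mulr_suml; apply: eq_bigr => t _.
  by rewrite mulr_sumr; apply: eq_bigr => t' _; rewrite rmorphM; ring.
rewrite exchange_big /=; apply: eq_bigr => t _.
rewrite exchange_big /= -[RHS](sum_delta (fun t' => v t * (v t')^*) t).
by apply: eq_bigr => t' _; rewrite -mulr_sumr HU.
Qed.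

Lemma Nv_oracle x v : Nv (oracle x v) = Nv v.
Proof.
pose h := fun s : qbasis n m => (s.1.1, s.1.2 (+) x s.1.1, s.2).
have hK : involutive h by move=> [[i b] z]; rewrite /h /= addbK.
rewrite /Nv [RHS](reindex_inj (can_inj hK)) //.
Qed.

Lemma Nv_ket s0 : Nv (ket R s0) = 1.
Proof.
rewrite /Nv /ket -[RHS](sum_delta (fun _ => 1) s0); apply: eq_bigr => s _.
by case: (s == s0); rewrite /= ?conjC1 ?conjC0 ?mulr1 ?mulr0.
Qed.

Lemma Nv_foldl x (Us : seq (qop R n m)) v : (forall U, List.In U Us -> unitary U) ->
  Nv (foldl (fun w U => qapply U (oracle x w)) v Us) = Nv v.
Proof.
elim: Us v => [|U Us IH] v H //=.
rewrite IH; last by move=> U' h; apply: H; right.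
by rewrite Nv_qapply ?Nv_oracle //; apply: H; left.
Qed.

Lemma qa_norm (A : qalg R n m) x : qalg_valid A ->
  \sum_s normsq (qa_final A x s) = 1.
Proof.
case=> H0 H1; apply: complexI; rewrite sum_normsq /qa_final Nv_foldl //.
by rewrite Nv_qapply // Nv_ket rmorph1.
Qed.

Lemma qa_sum (A : qalg R n m) x : qalg_valid A ->
  qa_prob A x true + qa_prob A x false = 1.
Proof.
move=> hv; rewrite -(qa_norm x hv) (bigID (fun s => qa_out A s)) /=.
by congr (_ + _); apply: eq_bigl => s; case: (qa_out A s).
Qed.

Lemma qa_lower (A : qalg R n m) : qalg_valid A ->
  (forall x, 1/2 < qa_prob A x (parity x)) -> (n.+1 %/ 2 <= qa_T A)%N.
Proof.
move=> hv H.
suff : (n <= qa_T A + qa_T A)%N by lia.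
rewrite leqNgt; apply/negP => hT.
have [x Hx] := avg_lemma hT (qprob_low A true) (fun x => qa_sum x hv).
by move: (H x); case: (parity x) in Hx *; lra.
Qed.

End QLower.


Section QUpper.
Variable R : realType.
Variable n : nat.
Hypothesis hn : (0 < n)%N.

Local Notation qb := (qbasis n 1).

Definition sg (b : bool) : R[i] := if b then -1 else 1.
Definition cb (z : 'I_2) : bool := z != ord0.

Lemma sgD a b : sg (a (+) b) = sg a * sg b.
Proof. by case: a; case: b; rewrite /sg /=; ring. Qed.

Lemma sg_sq b : sg b * sg b = 1.
Proof. by case: b; rewrite /sg; ring. Qed.

Lemma conj_sg b : (sg b)^* = sg b.
Proof. by case: b; rewrite /sg ?rmorphN1 ?rmorph1. Qed.

Lemma conj_half : ((1/2 : R[i]))^* = 1/2.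
Proof. by rewrite fmorph_div rmorph1 rmorph_nat. Qed.

Lemma conjM (a b : R[i]) : (a * b)^* = a^* * b^*.
Proof. exact: rmorphM. Qed.

Lemma conj_nat k : (k%:R : R[i])^* = k%:R.
Proof. exact: rmorph_nat. Qed.

Lemma I2_cases (z : 'I_2) : z = ord0 \/ z = ord_max.
Proof. by case: z => [[|[|k]] hk]; [left|right|] => //; apply/eqP. Qed.

Lemma cb0 : cb ord0 = false. Proof. by []. Qed.
Lemma cb1 : cb ord_max = true. Proof. by []. Qed.

Lemma sum_delta_l (T : finType) (F : T -> R[i]) t0 :
  \sum_t (t0 == t)%:R * F t = F t0.
Proof.
rewrite (bigD1 t0) //= eqxx mul1r big1 ?addr0 // => t ht.
by rewrite eq_sym (negbTE ht) mul0r.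
Qed.

Lemma sum_qb (F : qb -> R[i]) :
  \sum_k F k = \sum_(i : 'I_n) (F (i, false, ord0) + F (i, false, ord_max)
                 + F (i, true, ord0) + F (i, true, ord_max)).
Proof.
rewrite (eq_bigr (fun k => F (k.1, k.2))); last by case.
rewrite -(pair_bigA _ (fun a b => F (a, b))) /=.
rewrite (eq_bigr (fun p => \sum_j F ((p.1, p.2), j))); last by case.
rewrite -(pair_bigA _ (fun a b => \sum_j F ((a, b), j))) /=; apply: eq_bigr => i _.
rewrite big_bool /= !big_ord_recl big_ord0 !addr0.
have -> : lift ord0 (ord0 : 'I_1) = ord_max by apply/eqP.
by rewrite big_ord0 addr0; ring.
Qed.

Lemma sum_qb_delta (F : qb -> R[i]) (i1 i2 : 'I_n) :
  \sum_k (i1 == k.1.1)%:R * (k.1.1 == i2)%:R * F k =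
  (i1 == i2)%:R * (F (i1, false, ord0) + F (i1, false, ord_max)
                 + F (i1, true, ord0) + F (i1, true, ord_max)).
Proof.
rewrite sum_qb /=.
rewrite (eq_bigr (fun i => (i1 == i)%:R * ((i == i2)%:R * (F (i, false, ord0) + F (i, false, ord_max)
                 + F (i, true, ord0) + F (i, true, ord_max))))); last by move=> i _; ring.
by rewrite sum_delta_l.
Qed.

Definition rowmod (s0 : qb -> qb) (rho : qb -> bool) (M : qop R n 1) : qop R n 1 :=
  fun s t => sg (rho s) * M (s0 s) t.
Definition colmod (s0 : qb -> qb) (rho : qb -> bool) (M : qop R n 1) : qop R n 1 :=
  fun s t => M s (s0 t) * sg (rho t).
Definition Idq : qop R n 1 := fun s t => (s == t)%:R.

Lemma sgsg_eq (rho : qb -> bool) (s t : qb) (b : bool) :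
  (b = (s == t)) -> sg (rho s) * sg (rho t) * b%:R = (s == t)%:R.
Proof. by move=> ->; case: eqP => [->|_]; rewrite ?sg_sq ?mulr1 ?mulr0. Qed.

Lemma rowmod_unitary s0 rho M : injective s0 -> unitary M -> unitary (rowmod s0 rho M).
Proof.
move=> inj [HM1 HM2]; split=> s t; rewrite /rowmod.
  rewrite (eq_bigr (fun k => sg (rho s) * sg (rho t) * (M (s0 s) k * (M (s0 t) k)^*))); last first.
    by move=> k _; rewrite conjM conj_sg; ring.
  by rewrite -mulr_sumr HM1; apply: sgsg_eq; rewrite (inj_eq inj).
rewrite (eq_bigr (fun k => (M (s0 k) s)^* * M (s0 k) t)); last first.
  move=> k _; rewrite conjM conj_sg.
  by transitivity (sg (rho k) * sg (rho k) * ((M (s0 k) s)^* * M (s0 k) t)); [ring | rewrite sg_sq mul1r].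
rewrite -HM2; symmetry; exact: (reindex_inj inj).
Qed.

Lemma colmod_unitary s0 rho M : injective s0 -> unitary M -> unitary (colmod s0 rho M).
Proof.
move=> inj [HM1 HM2]; split=> s t; rewrite /colmod.
  rewrite (eq_bigr (fun k => M s (s0 k) * (M t (s0 k))^*)); last first.
    move=> k _; rewrite conjM conj_sg.
    by transitivity (sg (rho k) * sg (rho k) * (M s (s0 k) * (M t (s0 k))^*)); [ring | rewrite sg_sq mul1r].
  rewrite -HM1; symmetry; exact: (reindex_inj inj).
rewrite (eq_bigr (fun k => sg (rho s) * sg (rho t) * ((M k (s0 s))^* * M k (s0 t)))); last first.
  by move=> k _; rewrite conjM conj_sg; ring.
by rewrite -mulr_sumr HM2; apply: sgsg_eq; rewrite (inj_eq inj).
Qed.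

Lemma Idq_unitary : unitary Idq.
Proof.
split=> s t; rewrite /Idq.
  rewrite (eq_bigr (fun k => (s == k)%:R * (k == t)%:R)); last first.
    by move=> k _; rewrite conj_nat (eq_sym t k).
  by rewrite sum_delta_l.
rewrite (eq_bigr (fun k => (s == k)%:R * (k == t)%:R)); last first.
  by move=> k _; rewrite conj_nat (eq_sym k s).
by rewrite sum_delta_l.
Qed.

Definition Hmat : qop R n 1 := fun s t =>
  (s.1.1 == t.1.1)%:R * (1/2) * sg (s.1.2 && t.1.2) * sg (cb s.2 && cb t.2).

Lemma conj_H s t : (Hmat s t)^* = Hmat s t.
Proof. by rewrite /Hmat !conjM conj_nat !conj_sg -conjM conj_half. Qed.

Lemma H_sym s t : Hmat s t = Hmat t s.
Proof. by rewrite /Hmat eq_sym andbC [cb t.2 && _]andbC. Qed.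

Lemma H_sq s t : \sum_k Hmat s k * Hmat k t = (s == t)%:R.
Proof.
rewrite (eq_bigr (fun k => (s.1.1 == k.1.1)%:R * (k.1.1 == t.1.1)%:R *
   ((1/2) * sg (s.1.2 && k.1.2) * sg (cb s.2 && cb k.2) *
    ((1/2) * sg (k.1.2 && t.1.2) * sg (cb k.2 && cb t.2))))); last first.
  by move=> k _; rewrite /Hmat; ring.
rewrite sum_qb_delta /=.
case: s => [[i1 b1] z1]; case: t => [[i2 b2] z2] /=.
rewrite -[((i1, b1, z1) == (i2, b2, z2))]/((i1 == i2) && (b1 == b2) && (z1 == z2)).
case: (I2_cases z1) => ->; case: (I2_cases z2) => ->; case: b1; case: b2;
  rewrite ?cb0 ?cb1 /sg /= ?andbT ?andbF; case: (i1 == i2); rewrite /=;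
  rewrite ?mul0r //; by field.
Qed.

Lemma H_unitary : unitary Hmat.
Proof.
split=> s t.
  rewrite (eq_bigr (fun k => Hmat s k * Hmat k t)) ?H_sq //.
  by move=> k _; rewrite conj_H (H_sym t k).
rewrite (eq_bigr (fun k => Hmat s k * Hmat k t)) ?H_sq //.
by move=> k _; rewrite conj_H (H_sym k s).
Qed.

Definition i0 : 'I_n := Ordinal hn.
Definition kk := (n.+1 %/ 2)%N.
Definition single j : bool := ~~ (j.*2.+1 < n)%N.
Definition idx j (c : bool) : 'I_n :=
  insubd i0 (if c && (j.*2.+1 < n)%N then j.*2.+1 else j.*2).
Definition th j b c : bool := b && ~~ (c && single j).
Definition Phi j (g : R[i]) (Rb : bool) : qvec R n 1 := fun s =>
  g * ((s.1.1 == idx j (cb s.2))%:R * (1/2) * sg (th j s.1.2 (cb s.2)) * sg (Rb && cb s.2)).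
Definition yv (x : input n) j c := x (idx j c) && ~~ (c && single j).

Lemma oracle_Phi x j g Rb : oracle x (Phi j g Rb) =
  Phi j (g * sg (yv x j false)) (Rb (+) yv x j false (+) yv x j true).
Proof.
apply: functional_extensionality => -[[i b] z]; rewrite /oracle /Phi /=.
case: eqP => [->|_]; last by rewrite !mul0r !mulr0.
rewrite /yv /th; case: (cb z); case: (single j); case: b; case: Rb;
  case: (x (idx j true)); case: (x (idx j false)); rewrite /sg /=; ring.
Qed.

Definition sw (a b i : 'I_n) := if i == a then b else if i == b then a else i.

Lemma swK a b : involutive (sw a b).
Proof.
move=> i; rewrite /sw.
case: (eqVneq i a) => [->|ha].
  by rewrite eqxx; case: (eqVneq b a) => [->|hb]; rewrite ?eqxx // (negbTE hb) eqxx.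
case: (eqVneq i b) => [eib|hb]; first by subst i; rewrite ?eqxx.
by rewrite (negbTE ha) (negbTE hb).
Qed.

Lemma sw_eq a b i : (sw a b i == b) = (i == a).
Proof.
rewrite /sw; case: (eqVneq i a) => [eia|ha]; first by subst i; rewrite !eqxx.
case: (eqVneq i b) => [eib|hb]; first by subst i; rewrite eq_sym (negbTE ha).
by rewrite (negbTE hb).
Qed.

Definition tau (a b : bool -> 'I_n) (s : qb) : qb :=
  (sw (a (cb s.2)) (b (cb s.2)) s.1.1, s.1.2, s.2).

Lemma tauK a b : involutive (tau a b).
Proof. by move=> [[i c] z]; rewrite /tau /= swK. Qed.

Definition U0 : qop R n 1 :=
  rowmod (tau (idx 0) (fun _ => i0)) (fun s => s.1.2 (+) th 0 s.1.2 (cb s.2)) Hmat.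

Definition init : qb := (i0, true, ord0).

Lemma v0_Phi : qapply U0 (ket R init) = Phi 0 1 false.
Proof.
apply: functional_extensionality => -[[i b] z]; rewrite /qapply /ket sum_delta.
rewrite /U0 /rowmod /Hmat /tau /Phi /= sw_eq cb0.
case: (i == _); rewrite /th; case: b; case: (cb z); case: (single 0); rewrite /sg /=; ring.
Qed.

Definition Trans j : qop R n 1 :=
  rowmod (tau (idx j.+1) (idx j)) (fun s => th j s.1.2 (cb s.2) (+) th j.+1 s.1.2 (cb s.2)) Idq.

Lemma Trans_Phi j g Rb : qapply (Trans j) (Phi j g Rb) = Phi j.+1 g Rb.
Proof.
apply: functional_extensionality => -[[i b] z]; rewrite /qapply /Trans /rowmod /Idq.
rewrite (eq_bigr (fun t => sg (th j b (cb z) (+) th j.+1 b (cb z)) *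
   ((tau (idx j.+1) (idx j) (i, b, z) == t)%:R * Phi j g Rb t))); last by move=> t _; ring.
rewrite -mulr_sumr sum_delta_l /Phi /tau /= sw_eq.
case: (i == _); rewrite /th; case: b; case: (cb z); case: (single j); case: (single j.+1);
  case: Rb; rewrite /sg /=; ring.
Qed.

Definition Fin : qop R n 1 :=
  colmod (tau (fun _ => i0) (idx kk.-1)) (fun t => th kk.-1 t.1.2 (cb t.2) (+) t.1.2) Hmat.

Definition fst (g : R[i]) (Rb : bool) : qvec R n 1 := fun s =>
  g * ((s.1.1 == i0) && s.1.2 && (cb s.2 == Rb))%:R.

Lemma Fin_Phi g Rb : qapply Fin (Phi kk.-1 g Rb) = fst g Rb.
Proof.
apply: functional_extensionality => s; rewrite /qapply /Fin /colmod.
rewrite (reindex_inj (can_inj (tauK (fun _ => i0) (idx kk.-1)))) /=.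
rewrite (eq_bigr (fun t => (s.1.1 == t.1.1)%:R * (t.1.1 == i0)%:R *
   ((1/2) * sg (s.1.2 && t.1.2) * sg (cb s.2 && cb t.2) *
    (g * (1/2) * sg t.1.2 * sg (Rb && cb t.2))))); last first.
  move=> [[i b] z] _; rewrite tauK /Hmat /Phi /tau /= sw_eq.
  case: (i == i0); case: (s.1.1 == i); rewrite /th; case: b; case: (cb z);
    case: (single kk.-1); rewrite /sg /=; ring.
rewrite sum_qb_delta /fst; case: s => [[i1 b1] z1] /=.
case: (I2_cases z1) => ->; case: b1; case: Rb; rewrite ?cb0 ?cb1 /sg /=;
  case: (i1 == i0); rewrite /= ?mul0r ?mulr0 //; by field.
Qed.

Definition Qa : qalg R n 1 :=
  QAlg init U0 (rcons (mkseq Trans kk.-1) Fin) (fun s => cb s.2).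

Lemma kk_gt0 : (0 < kk)%N.
Proof. rewrite /kk; lia. Qed.

Lemma Qa_T : qa_T Qa = kk.
Proof. by rewrite /qa_T /= size_rcons size_mkseq prednK // kk_gt0. Qed.

Lemma tau_inj a b : injective (tau a b).
Proof. exact: can_inj (tauK a b). Qed.

Lemma Qa_valid : qalg_valid Qa.
Proof.
split; first by apply: rowmod_unitary; [exact: tau_inj | exact: H_unitary].
move=> U /=; rewrite -cats1 => HU; case: (List.in_app_or _ _ _ HU).
  rewrite /mkseq => /(proj1 (List.in_map_iff _ _ _)) [j [<- _]].
  by apply: rowmod_unitary; [exact: tau_inj | exact: Idq_unitary].
by move=> [<-|[]]; apply: colmod_unitary; [exact: tau_inj | exact: H_unitary].
Qed.

Definition Rs (x : input n) j := \big[addb/false]_(0 <= l < j) (yv x l false (+) yv x l true).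

Lemma mid x j : exists gb,
  foldl (fun v U => qapply U (oracle x v)) (qapply U0 (ket R init)) (mkseq Trans j)
  = Phi j (sg gb) (Rs x j).
Proof.
elim: j => [|j [gb IH]]; first by exists false; rewrite /Rs big_geq //= v0_Phi.
exists (gb (+) yv x j false).
rewrite mkseqS foldl_rcons IH oracle_Phi Trans_Phi -sgD /Rs big_nat_recr //=.
by rewrite addbA.
Qed.

Definition xn (x : input n) (k : nat) : bool := x (insubd i0 k).

Lemma Rs_eq x l : (l <= kk)%N -> Rs x l = \big[addb/false]_(0 <= i < minn l.*2 n) xn x i.
Proof.
elim: l => [|l IH] hl; first by rewrite /Rs !big_geq //; lia.
rewrite /Rs big_nat_recr //= -/(Rs x l) IH; last by lia.
have h2 : (l.*2 < n)%N by move: hl; rewrite /kk; lia.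
rewrite /yv /idx /single /= andbT.
case: (ltnP l.*2.+1 n) => h3 /=.
  have -> : minn l.+1.*2 n = l.*2.+2 by lia.
  have -> : minn l.*2 n = l.*2 by lia.
  by rewrite !big_nat_recr //= andbT /xn addbA.
have -> : minn l.+1.*2 n = l.*2.+1 by lia.
have -> : minn l.*2 n = l.*2 by lia.
by rewrite big_nat_recr //= andbF !addbF.
Qed.

Lemma Rs_parity x : Rs x kk = parity x.
Proof.
rewrite Rs_eq // (_ : minn kk.*2 n = n); last by rewrite /kk; lia.
rewrite /parity big_mkord; apply: eq_bigr => i _.
by rewrite /xn valKd.
Qed.

Lemma Qa_final x : exists gb, qa_final Qa x = fst (sg gb) (parity x).
Proof.
have [gb H] := mid x kk.-1.
exists (gb (+) yv x kk.-1 false).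
rewrite /qa_final /= foldl_rcons H oracle_Phi Fin_Phi -sgD.
congr fst; rewrite -Rs_parity -{4}(prednK kk_gt0) /Rs big_nat_recr //=.
by rewrite addbA.
Qed.

Lemma normsq_sg gb (b : bool) : normsq (sg gb * b%:R) = b%:R.
Proof. by case: gb; case: b; rewrite /sg /normsq /=; simpc; rewrite /=; ring. Qed.

Lemma Qa_prob x : qa_prob Qa x (parity x) = 1.
Proof.
have [gb E] := Qa_final x.
rewrite /qa_prob E /fst /=.
rewrite (eq_bigr (fun s => ((s.1.1 == i0) && s.1.2 && (cb s.2 == parity x))%:R));
  last by move=> s _; rewrite normsq_sg.
rewrite big_mkcond /=.
pose sstar : qb := (i0, true, if parity x then ord_max else ord0).
rewrite (eq_bigr (fun s => (s == sstar)%:R)); last first.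
  move=> [[i b] z] _ /=; rewrite /sstar.
  rewrite -[((i, b, z) == _)]/((i == i0) && (b == true) && (z == _)).
  case: (I2_cases z) => ->; case: b; case: (parity x); rewrite ?cb0 ?cb1 /= ?andbT ?andbF //;
  by case: (i == i0).
rewrite (bigD1 sstar) //= eqxx big1 ?addr0 // => s /negbTE ->.
by [].
Qed.


End QUpper.


Lemma bigmin_const1 (R : realType) (T : finType) :
  \big[Num.min/1]_(y : T) (1 : R) = 1.
Proof. rewrite unlock /reducebig; elim: (index_enum T) => [//|a r IH] /=. by rewrite IH minxx. Qed.

Theorem mainTheorem10 (R : realType) (n : nat) (hn : (0 < n)%N) :
  [/\ @UC_is R n (@parity n) n,
      @WUC_is R n (@parity n) n%:R,
      @UQ_is R n (@parity n) (n.+1 %/ 2)%N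
    & @WUQ_is R n (@parity n) (n.+1 %/ 2)%N%:R].
Proof.
have pminsucc : ra_minsucc (palg R n) (@parity n) = 1.
  rewrite /ra_minsucc (eq_bigr (fun _ => 1)) ?bigmin_const1 // => x _.
  exact: palg_prob.
have qminsucc : qa_minsucc (Qa R hn) (@parity n) = 1.
  rewrite /qa_minsucc (eq_bigr (fun _ => 1)) ?bigmin_const1 // => x _.
  exact: Qa_prob.
split.
- split.
    exists (palg R n); split; [exact: palg_valid | | by []].
    by move=> x; rewrite palg_prob; lra.
  by move=> A hv H; apply: ra_lower.
- split.
    exists (palg R n); split; [exact: palg_valid | by rewrite pminsucc; lra |].
    by rewrite /ra_wucost /ra_bias pminsucc log_cost_1 addr0.
  move=> A hv H.
  have Hx : forall x, 1/2 < ra_prob A x (parity x).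
    by move=> x; apply: lt_le_trans H _; apply: mbigmin_le.
  have hT := ra_lower hv Hx.
  rewrite /ra_wucost /ra_bias.
  have := log_cost_ge0 H (mbigmin_le1 _).
  have : (n%:R : R) <= (ra_T A)%:R by rewrite ler_nat.
  lra.
- split.
    exists 1%N, (Qa R hn); split; [exact: Qa_valid | | exact: Qa_T].
    by move=> x; rewrite Qa_prob; lra.
  by move=> m A hv H; apply: qa_lower.
- split.
    exists 1%N, (Qa R hn); split; [exact: Qa_valid | by rewrite qminsucc; lra |].
    by rewrite /qa_wucost /qa_bias qminsucc log_cost_1 addr0 Qa_T.
  move=> m A hv H.
  have Hx : forall x, 1/2 < qa_prob A x (parity x).
    by move=> x; apply: lt_le_trans H _; apply: mbigmin_le.
  have hT := qa_lower hv Hx.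
  rewrite /qa_wucost /qa_bias.
  have := log_cost_ge0 H (mbigmin_le1 _).
  have : (((n.+1 %/ 2)%N)%:R : R) <= (qa_T A)%:R by rewrite ler_nat.
  lra.
Qed.
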